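(* Let $A,B$ be real constants and let $(x_n)_{n\ge 0}$ be a solution of $$x_{n+10}=\frac{x_n}{A+B\,x_nx_{n+2}x_{n+4}x_{n+6}x_{n+8}},\qquad n\ge 0,$$ with initial values $x_0,\dots,x_9$, such that all terms are well-defined and nonzero. For $k\in\{0,\dots,9\}$ let $P_k=x_{\tau(k)}x_{\tau(k)+2}x_{\tau(k)+4}x_{\tau(k)+6}x_{\tau(k)+8}$ and for $s\ge 0$ let $m_s=5s+\lfloor k/2\rfloor$. Then for all $k\in\{0,\dots,9\}$ and $n\ge 0$: if $A=1$, $$x_{10n+k}=x_k\prod_{s=0}^{n-1}\frac{1+B\,m_s\,P_k}{1+B\,(m_s+1)\,P_k};$$ if $A\neq 1$, $$x_{10n+k}=x_k\prod_{s=0}^{n-1}\frac{A^{m_s}+\frac{B(1-A^{m_s})}{1-A}P_k}{A^{m_s+1}+\frac{B(1-A^{m_s+1})}{1-A}P_k}.$$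
   Context: $\tau(k)\in\{0,1\}$ denotes the remainder of $k$ upon division by $2$ and $\lfloor\cdot\rfloor$ is the floor function. An empty product equals $1$. *)

(* Defs.v *)
From Stdlib Require Import Reals Lra Lia.
Open Scope R_scope.

Fixpoint prodR (n : nat) (f : nat -> R) : R :=
  match n with
  | O => 1
  | S m => prodR m f * f m
  end.

Definition tau (k : nat) : nat := Nat.modulo k 2.

Definition Pk (x : nat -> R) (k : nat) : R :=
  x (tau k) * x (tau k + 2)%nat * x (tau k + 4)%nat * x (tau k + 6)%nat
    * x (tau k + 8)%nat.

Definition ms (k s : nat) : nat := (5 * s + Nat.div k 2)%nat.

(* Main.v *)
Require Import Defs.
From Stdlib Require Import Reals Lra Lia.
Open Scope R_scope.

Definition yy (x : nat -> R) (n : nat) : R :=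
  x n * x (n + 2)%nat * x (n + 4)%nat * x (n + 6)%nat * x (n + 8)%nat.

Fixpoint SS (A : R) (j : nat) : R :=
  match j with O => 0 | S i => A * SS A i + 1 end.

Lemma prodR_ext n f g : (forall s, f s = g s) -> prodR n f = prodR n g.
Proof. intros H; induction n; simpl; [reflexivity| now rewrite IHn, H]. Qed.

Lemma gen_div (a b c d P : R) : P <> 0 ->
  (a / P + b) / (c / P + d) = (a + b * P) / (c + d * P).
Proof.
  intros HP.
  replace (a + b * P) with ((a / P + b) * P) by (field; auto).
  replace (c + d * P) with ((c / P + d) * P) by (field; auto).
  unfold Rdiv. rewrite Rinv_mult.
  replace ((a * / P + b) * P * (/ (c * / P + d) * / P))
    with ((a * / P + b) * / (c * / P + d) * (P * / P)) by ring.
  rewrite Rinv_r by auto. ring.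
Qed.

Lemma SS_one j : SS 1 j = INR j.
Proof. induction j; simpl SS; [reflexivity| rewrite IHj, S_INR; ring]. Qed.

Lemma SS_ne A j : A <> 1 -> SS A j = (1 - A ^ j) / (1 - A).
Proof.
  intros HA. assert (1 - A <> 0) by lra.
  induction j; simpl SS; [simpl; field; auto| rewrite IHj; simpl; field; auto].
Qed.

Theorem mainTheorem2 (A B : R) (x : nat -> R)
  (Hnz : forall n : nat, x n <> 0)
  (Hden : forall n : nat,
     A + B * x n * x (n + 2)%nat * x (n + 4)%nat * x (n + 6)%nat * x (n + 8)%nat <> 0)
  (Hrec : forall n : nat,
     x (n + 10)%nat =
       x n / (A + B * x n * x (n + 2)%nat * x (n + 4)%nat * x (n + 6)%nat * x (n + 8)%nat)) :
  forall k n : nat, (k <= 9)%nat ->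
    (A = 1 ->
       x (10 * n + k)%nat =
         x k * prodR n (fun s =>
           (1 + B * INR (ms k s) * Pk x k) / (1 + B * (INR (ms k s) + 1) * Pk x k))) /\
    (A <> 1 ->
       x (10 * n + k)%nat =
         x k * prodR n (fun s =>
           (A ^ (ms k s) + B * (1 - A ^ (ms k s)) / (1 - A) * Pk x k) /
           (A ^ (ms k s + 1) + B * (1 - A ^ (ms k s + 1)) / (1 - A) * Pk x k))).
Proof.
  assert (Hy : forall n, yy x n <> 0).
  { intro n; unfold yy; repeat apply Rmult_integral_contrapositive_currified; auto. }
  assert (Hyr : forall n, / yy x (n + 2) = A * / yy x n + B).
  { intro n. unfold yy.
    replace (n + 2 + 2)%nat with (n + 4)%nat by lia.
    replace (n + 2 + 4)%nat with (n + 6)%nat by lia.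
    replace (n + 2 + 6)%nat with (n + 8)%nat by lia.
    replace (n + 2 + 8)%nat with (n + 10)%nat by lia.
    rewrite Hrec. specialize (Hden n). pose proof (Hnz n). pose proof (Hnz (n+2)%nat).
    pose proof (Hnz (n+4)%nat). pose proof (Hnz (n+6)%nat). pose proof (Hnz (n+8)%nat).
    field. repeat split; auto. }
  assert (Hx : forall n, x (n + 10)%nat = x n * / yy x n / / yy x (n + 2)).
  { intro n. rewrite Hyr. rewrite Hrec. unfold yy. specialize (Hden n).
    pose proof (Hnz n). pose proof (Hnz (n+2)%nat).
    pose proof (Hnz (n+4)%nat). pose proof (Hnz (n+6)%nat). pose proof (Hnz (n+8)%nat).
    field. repeat split; auto. rewrite !Rmult_assoc in *; auto. }
  assert (Hz : forall p j, / yy x (p + 2 * j) = A ^ j * / yy x p + B * SS A j).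
  { intros p j; induction j.
    - replace (p + 2 * 0)%nat with p by lia. simpl; ring.
    - replace (p + 2 * S j)%nat with (p + 2 * j + 2)%nat by lia.
      rewrite Hyr, IHj. simpl; ring. }
  assert (Hgen : forall k n, (k <= 9)%nat ->
    x (10 * n + k)%nat = x k * prodR n (fun s =>
      (A ^ (ms k s) + B * SS A (ms k s) * Pk x k) /
      (A ^ (ms k s + 1) + B * SS A (ms k s + 1) * Pk x k))).
  { intros k n Hk. induction n.
    - replace (10 * 0 + k)%nat with k by lia. simpl; ring.
    - simpl prodR. rewrite <- Rmult_assoc, <- IHn.
      replace (10 * S n + k)%nat with ((10 * n + k) + 10)%nat by lia.
      rewrite Hx.
      assert (Hk2 : (10 * n + k = tau k + 2 * ms k n)%nat).
      { unfold tau, ms. pose proof (Nat.div_mod k 2). lia. }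
      rewrite Hk2.
      replace (tau k + 2 * ms k n + 2)%nat with (tau k + 2 * (ms k n + 1))%nat by lia.
      rewrite !Hz.
      change (Pk x k) with (yy x (tau k)).
      unfold Rdiv at 1. rewrite Rmult_assoc. f_equal.
      rewrite <- (gen_div _ _ _ _ _ (Hy (tau k))).
      unfold Rdiv. f_equal. }
  intros k n Hk. split.
  - intros HA. rewrite Hgen by auto. f_equal. apply prodR_ext. intro s.
    subst A. rewrite !pow1, !SS_one, plus_INR. simpl INR. reflexivity.
  - intros HA. rewrite Hgen by auto. f_equal. apply prodR_ext. intro s.
    rewrite !SS_ne by auto. unfold Rdiv. rewrite !Rmult_assoc. reflexivity.
Qed.
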